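(* Under the hypotheses of the following setting — $S$ semibounded in $\mathfrak H$ with lower bound $\gamma$, $c\le\gamma$, $Q_c$ and $Q_c'=VQ_c$ representing maps for $\mathfrak t(S)-c$ with $V$ a partial isometry from $\overline{\mathrm{ran}}\,Q_c$ onto $\overline{\mathrm{ran}}\,Q_c'$, and $J_c,J_c'$ their companion relations — one has $$J_c'(J_c')^*=J_c'((J_c')^* )_{\rm reg}=J_c(J_c^* )_{\rm reg}=J_cJ_c^*,$$ $$(J_c')^{**}(J_c')^*=(((J_c')^* )_{\rm reg})^*((J_c')^* )_{\rm reg}=((J_c^* )_{\rm reg})^*(J_c^* )_{\rm reg}=J_c^{**}J_c^*.$$
   Context: Linear relations are linear subspaces $T\subset\mathfrak H\times\mathfrak K$; $T^*=\{\{h,k\}:(k,f)=(h,g)\ \forall\{f,g\}\in T\}$; $T^{**}$ is the closure; $RT=\{\{f,h\}:\exists g,\{f,g\}\in T,\{g,h\}\in R\}$. For a closed relation $T$, $T_{\rm reg}=\{\{f,(I-\pi)g\}:\{f,g\}\in T\}$ with $\pi$ the orthogonal projection onto $\mathrm{mul}\,T=\{g:\{0,g\}\in T\}$. $S$ semibounded with lower bound $\gamma$: $\gamma$ is the supremum of $c$ with $(\varphi',\varphi)\ge c\|\varphi\|^2$ on $S$; $\mathfrak t(S)[\varphi,\psi]=(\varphi',\psi)$ on $\mathrm{dom}\,S$. A representing map for $\mathfrak t(S)-c$ is a linear operator $Q_c$ into a Hilbert space, $\mathrm{dom}\,Q_c=\mathrm{dom}\,S$, with $\mathfrak t(S)[\varphi,\psi]=c(\varphi,\psi)+(Q_c\varphi,Q_c\psi)$;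 companion relation $J_c=\{\{Q_c\varphi,\varphi'-c\varphi\}:\{\varphi,\varphi'\}\in S\}$. *)

(* Defs.v *)
From mathcomp Require Import all_boot all_order all_algebra.
From mathcomp Require Import reals complex classical_sets.
Set Implicit Arguments. Unset Strict Implicit. Unset Printing Implicit Defensive.
Import Order.TTheory GRing.Theory Num.Theory.
Local Open Scope ring_scope.
Local Open Scope complex_scope.
Local Open Scope classical_set_scope.

Section Hilbert.
Variable R : realType.
Local Notation C := (R[i]).

Definition inner_product (V : lmodType C) (d : V -> V -> C) : Prop :=
  [/\ (forall (a : C) (x y z : V), d (a *: x + y) z = a * d x z + d y z),
      (forall x y : V, d y x = (d x y)^*),
      (forall x : V, 0 <= d x x) &
      (forall x : V, d x x = 0 -> x = 0)].

Definition complete_ip (V : lmodType C) (d : V -> V -> C) : Prop :=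
  forall u : nat -> V,
    (forall e : R, 0 < e -> exists N : nat, forall m n : nat, (N <= m)%N -> (N <= n)%N ->
        d (u m - u n) (u m - u n) < e%:C) ->
    exists l : V, forall e : R, 0 < e -> exists N : nat, forall n : nat, (N <= n)%N ->
        d (u n - l) (u n - l) < e%:C.

Definition hilbert (V : lmodType C) (d : V -> V -> C) : Prop :=
  inner_product d /\ complete_ip d.

Definition nclosure (V : lmodType C) (d : V -> V -> C) (A : set V) : set V :=
  [set x | forall e : R, 0 < e -> exists2 a, A a & d (x - a) (x - a) < e%:C].

Definition orth_to (V : lmodType C) (d : V -> V -> C) (A : set V) (x : V) : Prop :=
  forall a, A a -> d x a = 0.

Definition subspace (V : lmodType C) (A : set V) : Prop :=
  A 0 /\ forall (a : C) x y, A x -> A y -> A (a *: x + y).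

Definition linrel (H K : lmodType C) (T : set (H * K)) : Prop := subspace T.

Definition rdom (H K : Type) (T : set (H * K)) : set H :=
  [set f | exists g, T (f, g)].
Definition rmul (H K : lmodType C) (T : set (H * K)) : set K := [set g | T (0, g)].
Arguments rmul {H K} T.

Definition adj (H K : lmodType C) (dH : H -> H -> C) (dK : K -> K -> C)
  (T : set (H * K)) : set (K * H) :=
  [set hk | forall f g, T (f, g) -> dH hk.2 f = dK hk.1 g].

Definition rcomp (H K L : Type) (Rr : set (K * L)) (T : set (H * K)) : set (H * L) :=
  [set fh | exists g, T (fh.1, g) /\ Rr (g, fh.2)].

(* orthogonal projection onto a closed subspace M, written out:
   p = pi g  iff  p in M and g - p is orthogonal to M *)
Definition is_orth_proj (V : lmodType C) (d : V -> V -> C) (M : set V) (g p : V) : Prop :=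
  M p /\ orth_to d M (g - p).

(* regular part T_reg = {(f, (I - pi) g) : (f,g) in T}, pi = orthogonal
   projection onto mul T *)
Definition rreg (H K : lmodType C) (dK : K -> K -> C) (T : set (H * K)) : set (H * K) :=
  [set fh | exists g, T (fh.1, g) /\ is_orth_proj dK (rmul T) g (g - fh.2)].

Definition lower_bounds (H : lmodType C) (dH : H -> H -> C) (S : set (H * H)) : set R :=
  [set c | forall phi phi', S (phi, phi') -> c%:C * dH phi phi <= dH phi' phi].

Definition semibounded_lb (H : lmodType C) (dH : H -> H -> C) (S : set (H * H)) (gamma : R)
  : Prop :=
  (exists c, lower_bounds dH S c) /\
  (forall c, lower_bounds dH S c -> c <= gamma) /\
  (forall e : R, 0 < e -> exists2 c, lower_bounds dH S c & gamma - e < c).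

(* Q : H -> G is a representing map for t(S) - c: a linear operator with
   domain dom S (only its values on dom S are relevant) such that
   t(S)[phi,psi] = (phi', psi) = c (phi,psi) + (Q phi, Q psi). *)
Definition representing_map (H G : lmodType C) (dH : H -> H -> C) (dG : G -> G -> C)
  (S : set (H * H)) (c : R) (Q : H -> G) : Prop :=
  (forall (a : C) x y, rdom S x -> rdom S y -> Q (a *: x + y) = a *: Q x + Q y) /\
  (forall phi phi' psi, S (phi, phi') -> rdom S psi ->
     dH phi' psi = c%:C * dH phi psi + dG (Q phi) (Q psi)).

Definition companion (H G : lmodType C) (S : set (H * H)) (c : R) (Q : H -> G)
  : set (G * H) :=
  [set qh | exists phi phi', [/\ S (phi, phi'), qh.1 = Q phi & qh.2 = phi' - c%:C *: phi]].

Definition qran (H G : Type) (S : set (H * H)) (Q : H -> G) : set G := Q @` rdom S.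

Definition partial_isometry (G G' : lmodType C) (dG : G -> G -> C) (dG' : G' -> G' -> C)
  (M : set G) (N : set G') (V : G -> G') : Prop :=
  [/\ (forall (a : C) x y, V (a *: x + y) = a *: V x + V y),
      (forall x, M x -> dG' (V x) (V x) = dG x x),
      (forall x, orth_to dG M x -> V x = 0) &
      (forall y, N y <-> exists2 x, M x & V x = y)].

End Hilbert.

(* Main.v *)
Require Import Defs.
From mathcomp Require Import all_boot all_order all_algebra.
From mathcomp Require Import reals complex classical_sets boolp.
From mathcomp Require Import ring lra.
Import Order.TTheory GRing.Theory Num.Theory.
Local Open Scope ring_scope.
Local Open Scope complex_scope.
Local Open Scope classical_set_scope.
Set Implicit Arguments. Unset Strict Implicit.

Section IP.
Variable R : realType.
Local Notation C := R[i].
Variable V : lmodType C.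
Variable d : V -> V -> C.
Hypothesis hd : inner_product d.

Lemma dDl x y z : d (x + y) z = d x z + d y z.
Proof. by case: hd => h _ _ _; rewrite -[x]scale1r h mul1r scale1r. Qed.
Lemma d0l z : d 0 z = 0.
Proof. have h := dDl 0 0 z; rewrite addr0 in h. by apply: (addrI (d 0 z)); rewrite addr0 -h. Qed.
Lemma dZl a x z : d (a *: x) z = a * d x z.
Proof. by case: hd => h _ _ _; rewrite -[a *: x]addr0 h d0l addr0. Qed.
Lemma dNl x z : d (- x) z = - d x z.
Proof. by rewrite -scaleN1r dZl mulN1r. Qed.
Lemma dBl x y z : d (x - y) z = d x z - d y z.
Proof. by rewrite dDl dNl. Qed.
Lemma dC x y : d y x = (d x y)^*.
Proof. by case: hd. Qed.
Lemma dDr x y z : d z (x + y) = d z x + d z y.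
Proof. by rewrite (dC (x + y)) (dC x) (dC y) dDl rmorphD. Qed.
Lemma dZr a x z : d z (a *: x) = a^* * d z x.
Proof. by rewrite (dC (a *: x)) (dC x) dZl rmorphM. Qed.
Lemma d0r z : d z 0 = 0.
Proof. by rewrite dC d0l conjc0. Qed.
Lemma dNr x z : d z (- x) = - d z x.
Proof. by rewrite (dC (- x)) (dC x) dNl rmorphN. Qed.
Lemma dBr x y z : d z (x - y) = d z x - d z y.
Proof. by rewrite dDr dNr. Qed.

Definition B x y := complex.Re (d x y).
Definition Nn x := B x x.


Lemma dxx x : d x x = (Nn x)%:C.
Proof.
case: hd => _ _ h _; have := ger0_Im (h x); rewrite /Nn /B.
by case: (d x x) => a b /= ->.
Qed.
Lemma Nn_ge0 x : 0 <= Nn x.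
Proof. by case: hd => _ _ h _; have := h x; rewrite dxx lecR. Qed.
Lemma Nn_eq0 x : Nn x = 0 -> x = 0.
Proof. by case: hd => _ _ _ h e; apply: h; rewrite dxx e. Qed.
Lemma dlt x e : (d x x < e%:C) = (Nn x < e).
Proof. by rewrite dxx ltcR. Qed.

Lemma BDl x y z : B (x + y) z = B x z + B y z.
Proof. by rewrite /B dDl raddfD. Qed.
Lemma BZl (r : R) x z : B (r%:C *: x) z = r * B x z.
Proof. by rewrite /B dZl; case: (d x z) => a b /=; rewrite !mul0r subr0. Qed.
Lemma BC x y : B x y = B y x.
Proof. by rewrite /B dC; case: (d y x). Qed.
Lemma BNl x z : B (- x) z = - B x z.
Proof. by rewrite /B dNl raddfN. Qed.
Lemma BBl x y z : B (x - y) z = B x z - B y z.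
Proof. by rewrite BDl BNl. Qed.
Lemma BDr x y z : B z (x + y) = B z x + B z y.
Proof. by rewrite BC BDl !(BC z). Qed.
Lemma BBr x y z : B z (x - y) = B z x - B z y.
Proof. by rewrite BC BBl !(BC z). Qed.
Lemma BZr (r : R) x z : B z (r%:C *: x) = r * B z x.
Proof. by rewrite BC BZl BC. Qed.

Lemma NnB x r y : Nn (x - r%:C *: y) = Nn x - 2 * r * B x y + r ^+ 2 * Nn y.
Proof.
rewrite /Nn !(BBl, BBr, BZl, BZr) (BC y x); ring.
Qed.

Lemma CS x y : B x y ^+ 2 <= Nn x * Nn y.
Proof.
have [e|ne] := eqVneq (Nn y) 0.
  by rewrite e (Nn_eq0 e) /B d0r /= expr0n /= mulr0.
have yp : 0 < Nn y by rewrite lt_def ne Nn_ge0.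
have := Nn_ge0 (x - (B x y / Nn y)%:C *: y); rewrite NnB => h.
have e : B x y / Nn y * Nn y = B x y by rewrite mulfVK.
nra.
Qed.


Lemma NnN x : Nn (- x) = Nn x.
Proof. by rewrite /Nn BNl BC BNl opprK. Qed.
Lemma NnZ r x : Nn (r%:C *: x) = r ^+ 2 * Nn x.
Proof. by rewrite /Nn BZl BZr mulrA expr2. Qed.
Lemma NnD x y : Nn (x + y) = Nn x + 2 * B x y + Nn y.
Proof. by rewrite /Nn !(BDl, BDr) (BC y x); ring. Qed.

Lemma sq_small (z : R) : (forall e, 0 < e -> z ^+ 2 < e) -> z = 0.
Proof.
move=> h; apply/eqP; apply/negPn/negP => ne.
have p : 0 < z ^+ 2 by rewrite lt_def sqrf_eq0 ne sqr_ge0.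
by have := h _ p; rewrite ltxx.
Qed.

Lemma dzero y f : B y f = 0 -> B y ('i *: f) = 0 -> d y f = 0.
Proof.
rewrite /B dZr; case: (d y f) => a b /= -> .
by rewrite mul0r mulN1r opprK add0r => ->.
Qed.

Definition approx (P : set V) x :=
  forall e : R, 0 < e -> exists a, P a /\ Nn (x - a) < e.

Lemma approxB P x f : approx P x -> (forall a, P a -> B a f = 0) -> B x f = 0.
Proof.
move=> ha hP; apply: sq_small => t t0.
have f1 : 0 < Nn f + 1 by have := Nn_ge0 f; lra.
have [a [Pa lt]] := ha (t / (Nn f + 1)) (divr_gt0 t0 f1).
have e : B x f = B (x - a) f by rewrite BBl (hP a Pa) subr0.
rewrite e; have cs := CS (x - a) f.
have : Nn (x - a) * (Nn f + 1) < t by rewrite -ltr_pdivlMr.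
have := Nn_ge0 (x - a); have := Nn_ge0 f; nra.
Qed.

Lemma approxd P x f : approx P x -> (forall a, P a -> d a f = 0) -> d x f = 0.
Proof.
move=> ha hP; apply: dzero; apply: (@approxB P x _ ha) => a Pa.
  by rewrite /B hP.
by rewrite /B dZr hP // mulr0.
Qed.

Definition io (n : nat) : R := (n.+1%:R)^-1.
Lemma io_gt0 n : 0 < io n.
Proof. by rewrite /io invr_gt0 ltr0Sn. Qed.

Lemma small_inv (e : R) : 0 < e ->
  exists N, forall n, (N <= n)%N -> io n < e.
Proof.
move=> e0; have ei : 0 < e^-1 by rewrite invr_gt0.
have hb := archi_boundP (ltW ei).
exists (Num.bound e^-1) => n hn; rewrite /io.
rewrite invf_plt ?posrE ?ltr0Sn //; apply: (lt_le_trans hb).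
by rewrite ler_nat; apply: leqW.
Qed.

Definition closedP (M : set V) := forall x, approx M x -> M x.

Lemma para x a b :
  Nn (a - b) + 4 * Nn (x - (2^-1)%:C *: (a + b)) = 2 * Nn (x - a) + 2 * Nn (x - b).
Proof.
rewrite /Nn !(BBl, BBr, BDl, BDr, BZl, BZr) (BC a x) (BC b x) (BC b a); by field.
Qed.

Lemma proj (M : set V) : complete_ip d -> subspace M -> closedP M ->
  forall x, exists p, M p /\ orth_to d M (x - p).
Proof.
move=> hc [M0 Ms] cM x.
have MD a b : M a -> M b -> M (a + b) by move=> ??; rewrite -[a]scale1r; apply: Ms.
have MZ r a : M a -> M (r *: a) by move=> ?; rewrite -[_ *: a]addr0; apply: Ms.
pose E := [set r | exists m, M m /\ r = Nn (x - m)].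
have Elb : has_lbound E by exists 0 => r [m [_ ->]]; exact: Nn_ge0.
have hinf : has_inf E by split => //; exists (Nn (x - 0)), 0.
pose del := inf E.
have delle m : M m -> del <= Nn (x - m).
  by move=> Mm; apply: ge_inf => //; exists m.
have ex : forall n : nat, exists m, M m /\ Nn (x - m) < del + io n.
  move=> n; have ip := io_gt0 n.
  by have [r [m [Mm ->]] lt] := inf_adherent ip hinf; exists m.
case: (choice ex) => u hu.
have Mu n : M (u n) by case: (hu n).
have Cau n k : Nn (u n - u k) < 2 * io n + 2 * io k.
  have := para x (u n) (u k).
  have := delle _ (MZ (2^-1)%:C _ (MD _ _ (Mu n) (Mu k))).
  case: (hu n) => _; case: (hu k) => _.
  set A := Nn (x - u k); set B1 := Nn (x - u n); set C1 := Nn (x - _ *: _).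
  set D := Nn (u n - u k).
  lra.
have [p hp] : exists p, forall e : R, 0 < e -> exists N : nat, forall n : nat, (N <= n)%N ->
        Nn (u n - p) < e.
  have hCa : forall e : R, 0 < e -> exists N : nat, forall m n : nat, (N <= m)%N -> (N <= n)%N ->
        d (u m - u n) (u m - u n) < e%:C.
    move=> e e0; have e4 : 0 < e / 4 by rewrite divr_gt0.
    have [N hN] := small_inv e4; exists N => m n hm hn; rewrite dlt.
    by have := Cau m n; have := hN _ hm; have := hN _ hn; lra.
  have [p hp] := hc u hCa.
  by exists p => e e0; have [N hN] := hp e e0; exists N => n hn; rewrite -dlt; apply: hN.
have Mp : M p.
  apply: cM => e e0; have [N hN] := hp e e0; exists (u N); split => //.
  by rewrite -NnN opprB; apply: hN.
exists p; split => //.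
suff hB m : M m -> B (x - p) m = 0.
  move=> m Mm; apply: dzero; [exact: hB | apply: hB; exact: MZ].
move=> Mm; set w := B (x - p) m.
have key n : w ^+ 2 <= 4 * (Nn (u n - p) * Nn m) + 2 * (Nn m + 1) * io n.
  have ineq t : 2 * t * B (x - u n) m < t ^+ 2 * Nn m + io n.
    have := delle _ (MD _ _ (Mu n) (MZ t%:C _ Mm)).
    rewrite opprD addrA NnB; case: (hu n) => _; lra.
  have ex2 : B (x - u n) m = w + B (p - u n) m.
    by rewrite -BDl addrA subrK.
  have cs := CS (p - u n) m.
  rewrite -NnN opprB.
  set en := B (p - u n) m in ex2 cs.
  have m0 := Nn_ge0 m.
  have m1 : 0 < Nn m + 1 by lra.
  set s := (Nn m + 1)^-1.
  have s0 : 0 < s by rewrite invr_gt0.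
  have s1 : s * (Nn m + 1) = 1 by rewrite mulVf // gt_eqF.
  have h1 := ineq (s * w); rewrite ex2 in h1.
  have h2 : s ^+ 2 * w ^+ 2 * Nn m <= s * w ^+ 2 * (1 - s).
    have sN : s * Nn m = 1 - s by rewrite -s1; ring.
    have -> : s ^+ 2 * w ^+ 2 * Nn m = s * w ^+ 2 * (s * Nn m) by ring.
    by rewrite sN.
  have h3 : 2 * w * en >= - (w ^+ 2 / 2 + 2 * en ^+ 2).
    have := sqr_ge0 (w + 2 * en); rewrite expr2; nra.
  have iop := io_gt0 n.
  have : s * w ^+ 2 / 2 < io n + 2 * s * en ^+ 2 by nra.
  move=> h4; have : w ^+ 2 < 2 * io n * (Nn m + 1) + 4 * en ^+ 2.
    have := ltr_pM2r m1; nra.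
  nra.
apply: sq_small => e e0.
have m1 : 0 < Nn m + 1 by have := Nn_ge0 m; lra.
have e1 : 0 < e / (8 * (Nn m + 1)) by rewrite divr_gt0 // mulr_gt0.
have e2 : 0 < e / (4 * (Nn m + 1)) by rewrite divr_gt0 // mulr_gt0.
have [N1 hN1] := hp _ e1; have [N2 hN2] := small_inv e2.
have k := key (maxn N1 N2).
have a1 := hN1 (maxn N1 N2) (leq_maxl _ _).
have a2 := hN2 (maxn N1 N2) (leq_maxr _ _).
move: k a1 a2; set a := Nn _; set b := io _.
have a0 : 0 <= a by apply: Nn_ge0.
rewrite !ltr_pdivlMr ?mulr_gt0 //.
have := Nn_ge0 m; nra.
Qed.

Lemma NnZc a x : Nn (a *: x) = (complex.Re a ^+ 2 + complex.Im a ^+ 2) * Nn x.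
Proof.
rewrite /Nn /B dZl dZr dxx; case: a => a b /=; ring.
Qed.

Lemma Nn_tri u v : Nn (u + v) <= 2 * Nn u + 2 * Nn v.
Proof.
have := Nn_ge0 (u - v); rewrite NnD NnN /B dNr raddfN -/(B u v) NnD; lra.
Qed.

Lemma Nn0 : Nn 0 = 0.
Proof. by rewrite /Nn /B d0l. Qed.

Lemma approx_cl A x : nclosure d A x <-> approx A x.
Proof.
split => h e e0.
  by have [a Aa lt] := h e e0; exists a; split => //; rewrite -dlt.
by have [a [Aa lt]] := h e e0; exists a => //; rewrite dlt.
Qed.

Lemma cl_incl A x : A x -> nclosure d A x.
Proof. by move=> Ax; apply/approx_cl => e e0; exists x; rewrite subrr Nn0. Qed.

Lemma cl_closed A : closedP (nclosure d A).
Proof.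
move=> x hx; apply/approx_cl => e e0.
have e4 : 0 < e / 4 by rewrite divr_gt0.
have [a [/approx_cl ha lt1]] := hx _ e4.
have [b [Ab lt2]] := ha _ e4.
exists b; split => //.
have := Nn_tri (x - a) (a - b); rewrite addrA subrK; lra.
Qed.

Lemma cl_sub A : subspace A -> subspace (nclosure d A).
Proof.
move=> [A0 As]; split; first exact: cl_incl.
move=> a x y /approx_cl hx /approx_cl hy; apply/approx_cl => e e0.
set k := complex.Re a ^+ 2 + complex.Im a ^+ 2.
have k0 : 0 <= k by rewrite addr_ge0 // sqr_ge0.
have e1 : 0 < e / (4 * (k + 1)) by rewrite divr_gt0 // mulr_gt0 //; lra.
have [a1 [A1 lt1]] := hx _ e1; have [a2 [A2 lt2]] := hy _ e1.
exists (a *: a1 + a2); split; first exact: As.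
have -> : a *: x + y - (a *: a1 + a2) = a *: (x - a1) + (y - a2).
  by rewrite scalerBr opprD addrACA.
have := Nn_tri (a *: (x - a1)) (y - a2); rewrite NnZc -/k.
have k1 : 0 < 4 * (k + 1) by lra.
move: lt1 lt2; rewrite !ltr_pdivlMr //.
have := Nn_ge0 (x - a1); have := Nn_ge0 (y - a2); nra.
Qed.

Lemma cl_orth A r : (forall a, A a -> d r a = 0) -> forall x, nclosure d A x -> d r x = 0.
Proof.
move=> h x /approx_cl hx; rewrite dC (@approxd A x r hx) ?conjc0 // => a Aa.
by rewrite dC h // conjc0.
Qed.

Lemma dpol x a y :
  d (x + a *: y) (x + a *: y) = d x x + a^* * d x y + a * d y x + a * a^* * d y y.
Proof. by rewrite !(dDl, dDr, dZl, dZr); ring. Qed.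
End IP.

Section Pol.
Variable R : realType.
Local Notation C := R[i].
Variables (V1 V2 : lmodType C) (d1 : V1 -> V1 -> C) (d2 : V2 -> V2 -> C).
Hypotheses (h1 : inner_product d1) (h2 : inner_product d2).
Variable F : V1 -> V2.
Hypothesis hF : forall (a : C) x y, F (a *: x + y) = a *: F x + F y.

Lemma conj1C : Num.conj (1 : C) = 1.
Proof. exact: conjC1. Qed.
Lemma conjiC : Num.conj ('i%C : C) = - 'i%C.
Proof. by apply/eqP; rewrite eq_complex /= oppr0 !eqxx. Qed.

Lemma polar x y : d2 (F x) (F x) = d1 x x -> d2 (F y) (F y) = d1 y y ->
  d2 (F (x + 1 *: y)) (F (x + 1 *: y)) = d1 (x + 1 *: y) (x + 1 *: y) ->
  d2 (F (x + 'i%C *: y)) (F (x + 'i%C *: y)) = d1 (x + 'i%C *: y) (x + 'i%C *: y) ->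
  d2 (F x) (F y) = d1 x y.
Proof.
have Fl a : F (x + a *: y) = F x + a *: F y by rewrite [x + _]addrC hF addrC.
rewrite !Fl !dpol // conj1C conjiC => ex ey e1 ei.
rewrite ex ey in e1 ei.
have ii : 'i%C * 'i%C = -1 :> C by rewrite -expr2 sqr_i.
set s := d1 x y in e1 ei *; set t := d1 y x in e1 ei.
set s' := d2 (F x) (F y) in e1 ei *; set t' := d2 (F y) (F x) in e1 ei.
have e2 : s' + t' = s + t.
  by apply: (addIr (d1 y y)); apply: (addrI (d1 x x)); move: e1; rewrite !mul1r !addrA.
have e3 : - 'i%C * s' + 'i%C * t' = - 'i%C * s + 'i%C * t.
  apply: (addIr ('i%C * - 'i%C * d1 y y)); apply: (addrI (d1 x x)); move: ei; rewrite !addrA.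
  by [].
have key (a b : C) : 2 * a = (a + b) + 'i%C * (- 'i%C * a + 'i%C * b).
  have -> : 'i%C * (- 'i%C * a + 'i%C * b) = - ('i%C * 'i%C) * a + ('i%C * 'i%C) * b by ring.
  rewrite ii; ring.
apply: (@mulfI _ 2); first by rewrite pnatr_eq0.
by rewrite (key s' t') e2 e3 -key.
Qed.
End Pol.

Section Rel.
Variable R : realType.
Local Notation C := R[i].
Variables (H G : lmodType C) (dH : H -> H -> C) (dG : G -> G -> C).
Hypotheses (hH : inner_product dH) (hG : inner_product dG).
Variable J : set (G * H).
Local Notation Js := (adj dG dH J).
Local Notation Jsr := (rreg dG Js).

Lemma mulE k : rmul Js k <-> (forall f g, J (f, g) -> dG k f = 0).
Proof.
by split => h f g Jfg; have := h f g Jfg => /=; rewrite d0l.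
Qed.

Lemma adj_subB f g p : Js (f, g) -> rmul Js p -> Js (f, g - p).
Proof.
move=> h /mulE hp a b Jab /=; rewrite (dBl hG) (hp _ _ Jab) subr0; exact: h.
Qed.

Lemma rreg_sub f g : Jsr (f, g) -> Js (f, g).
Proof.
move=> [g0 [h [hp _]]]; have := adj_subB h hp; by rewrite opprB addrC subrK.
Qed.

Lemma orth_rreg f g : Jsr (f, g) -> orth_to dG (rmul Js) g.
Proof. by move=> [g0 [h [hp ho]]]; move: ho; rewrite opprB addrC subrK. Qed.

Lemma mul0 : rmul Js 0.
Proof. by apply/mulE => f g _; rewrite d0l. Qed.

Lemma rreg_intro f g : Js (f, g) -> orth_to dG (rmul Js) g -> Jsr (f, g).
Proof.
by move=> h ho; exists g; split => //=; rewrite subrr; split; [exact: mul0 | rewrite subr0].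
Qed.

Lemma mul_sub : subspace (rmul Js).
Proof.
split; first exact: mul0.
move=> a x y /mulE hx /mulE hy; apply/mulE => f g Jfg.
by rewrite (dDl hG) (dZl hG) (hx _ _ Jfg) (hy _ _ Jfg) mulr0 addr0.
Qed.

Lemma mul_closed : closedP dG (rmul Js).
Proof.
move=> x hx; apply/mulE => f g Jfg; apply: (approxd hG hx) => a /mulE ha.
exact: ha Jfg.
Qed.

Lemma dom_orth f h k : J (f, h) -> rmul Js k -> dG f k = 0.
Proof. by move=> Jfh /mulE hk; rewrite (dC hG) (hk _ _ Jfh) conjc0. Qed.

Lemma L1 : rcomp J Js = rcomp J Jsr.
Proof.
apply/seteqP; split => [[f h] /= [g [h1 h2]] | [f h] /= [g [h1 h2]]]; exists g; split => //.
  by apply: rreg_intro => // k hk; exact: dom_orth h2 hk.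
exact: rreg_sub h1.
Qed.

Lemma L2 : complete_ip dG ->
  rcomp (adj dH dG Js) Js = rcomp (adj dH dG Jsr) Jsr.
Proof.
move=> hc; apply/seteqP; split => [[f h] /= [g [h1 h2]] | [f h] /= [g [h1 h2]]]; exists g.
  have og : orth_to dG (rmul Js) g.
    by move=> k hk; have := h2 0 k hk => /=; rewrite (d0r hH) => <-.
  split; first exact: rreg_intro.
  by move=> a b /rreg_sub hab; exact: h2.
split; first exact: rreg_sub h1.
have og := orth_rreg h1.
move=> a b hab /=.
have [p [hp ho]] := proj hG hc mul_sub mul_closed b.
have : Jsr (a, b - p).
  by exists b; split => //; rewrite opprB addrC subrK.
move=> /h2 /= ->; by rewrite (dBr hG) (og _ hp) subr0.
Qed.
End Rel.

Lemma dBl0 (R : realType) (V : lmodType R[i]) (d : V -> V -> R[i]) (hd : inner_product d)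
  b m z : d (b - m) z = 0 -> d m z = d b z.
Proof. by rewrite (dBl hd) => /eqP; rewrite subr_eq0 => /eqP. Qed.
Lemma dBr0 (R : realType) (V : lmodType R[i]) (d : V -> V -> R[i]) (hd : inner_product d)
  b m z : d (b - m) z = 0 -> d z m = d z b.
Proof. by move=> e; rewrite (dC hd m) (dC hd b) (dBl0 hd e). Qed.

Section Comp.
Variable R : realType.
Local Notation C := R[i].
Variables (H : lmodType C) (dH : H -> H -> C) (hH : inner_product dH).
Variables (S : set (H * H)) (c : R) (linS : linrel S).

Lemma L3h (G1 G2 : lmodType C) (d1 : G1 -> G1 -> C) (d2 : G2 -> G2 -> C)
  (Q1 : H -> G1) (Q2 : H -> G2) :
  representing_map dH d1 S c Q1 -> representing_map dH d2 S c Q2 ->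
  rcomp (companion S c Q1) (adj d1 dH (companion S c Q1)) `<=`
  rcomp (companion S c Q2) (adj d2 dH (companion S c Q2)).
Proof.
move=> [_ r1] [_ r2].
have iso phi phi' psi psi' : S (phi, phi') -> S (psi, psi') ->
    d2 (Q2 phi) (Q2 psi) = d1 (Q1 phi) (Q1 psi).
  move=> Sp Sq; have dq : rdom S psi by exists psi'.
  have := r1 _ _ _ Sp dq; rewrite (r2 _ _ _ Sp dq) => /addrI; done.
move=> [f h] /= [g [h1 [phi [phi' [Sp /= eg eh]]]]].
exists (Q2 phi); split; last by exists phi, phi'.
move=> a b [psi [psi' [Sq /= -> ->]]].
rewrite (iso _ _ _ _ Sp Sq) -eg; apply: h1; by exists psi, psi'.
Qed.

Lemma L3 (G1 G2 : lmodType C) (d1 : G1 -> G1 -> C) (d2 : G2 -> G2 -> C)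
  (Q1 : H -> G1) (Q2 : H -> G2) :
  representing_map dH d1 S c Q1 -> representing_map dH d2 S c Q2 ->
  rcomp (companion S c Q1) (adj d1 dH (companion S c Q1)) =
  rcomp (companion S c Q2) (adj d2 dH (companion S c Q2)).
Proof. by move=> h1 h2; apply/seteqP; split; apply: L3h. Qed.

Lemma qran_sub (G : lmodType C) (dG : G -> G -> C) (Q : H -> G) :
  representing_map dH dG S c Q -> subspace (qran S Q).
Proof.
move=> [lQ _]; case: linS => S0 Ss.
have d0 : rdom S 0 by exists 0.
have Q0 : Q 0 = 0.
  by have := lQ (-1) 0 0 d0 d0; rewrite scaler0 addr0 scaleN1r addNr.
split; first by exists 0.
move=> a _ _ [u [u' Su] <-] [v [v' Sv] <-].
have S' := Ss a _ _ Su Sv.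
exists (a *: u + v); first by exists (a *: u' + v').
by rewrite lQ //; [exists u' | exists v'].
Qed.
End Comp.

Section Four.
Variable R : realType.
Local Notation C := R[i].
Variables (H : lmodType C) (dH : H -> H -> C) (hH : inner_product dH).
Variables (S : set (H * H)) (c : R) (linS : linrel S).

Lemma in_cl (G : lmodType C) (dG : G -> G -> C) (hG : hilbert dG) (Q : H -> G)
  (hQ : representing_map dH dG S c Q) g h :
  adj dH dG (adj dG dH (companion S c Q)) (g, h) -> nclosure dG (qran S Q) g.
Proof.
case: hG => hG hc => h2.
have Msub := cl_sub hG (qran_sub linS hQ).
have [p [Mp ho]] := proj hG hc Msub (@cl_closed _ _ _ hG (qran S Q)) g.
have mr : rmul (adj dG dH (companion S c Q)) (g - p).
  move=> a b [psi [psi' [Sq /= -> _]]].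
  rewrite (@d0l _ _ _ hH b); apply: (ho); apply: (@cl_incl _ _ _ hG); exists psi => //; by exists psi'.
have e : dG g (g - p) = 0 by have := h2 _ _ mr; rewrite /= (d0r hH) => <-.
move: e; rewrite -{1}(subrK p g) (dDl hG) (dC hG (g - p) p) (ho _ Mp) conjc0 addr0.
case: hG => _ _ _ h0 /h0 /eqP; rewrite subr_eq0 => /eqP ->; exact: Mp.
Qed.

End Four.

Section Five.
Variable R : realType.
Local Notation C := R[i].
Variables (H : lmodType C) (dH : H -> H -> C) (hH : inner_product dH).
Variables (S : set (H * H)) (c : R) (linS : linrel S).
Variables (G G' : lmodType C) (dG : G -> G -> C) (dG' : G' -> G' -> C).
Hypotheses (hG : hilbert dG) (hG' : hilbert dG').
Variables (Q : H -> G) (V : G -> G').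
Hypotheses (hQ : representing_map dH dG S c Q)
  (hV : partial_isometry dG dG' (nclosure dG (qran S Q))
          (nclosure dG' (qran S (V \o Q))) V)
  (hQ' : representing_map dH dG' S c (V \o Q)).

Local Notation M := (nclosure dG (qran S Q)).
Local Notation N := (nclosure dG' (qran S (V \o Q))).
Local Notation J := (companion S c Q).
Local Notation J' := (companion S c (V \o Q)).

Let iG := hG.1.
Let iG' := hG'.1.
Let cG := hG.2.
Let cG' := hG'.2.
Let MS : subspace M := cl_sub iG (qran_sub linS hQ).
Let NS : subspace N := cl_sub iG' (qran_sub linS hQ').
Let MC : closedP dG M := @cl_closed _ _ _ iG _.
Let NC : closedP dG' N := @cl_closed _ _ _ iG' _.

Lemma MQ psi psi' : S (psi, psi') -> M (Q psi).
Proof. move=> Sq; apply: (@cl_incl _ _ _ iG); exists psi => //; by exists psi'. Qed.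
Lemma NQ psi psi' : S (psi, psi') -> N (V (Q psi)).
Proof. move=> Sq; apply: (@cl_incl _ _ _ iG'); exists psi => //; by exists psi'. Qed.

Lemma VN x : M x -> N (V x).
Proof. case: hV => _ _ _ h4 Mx; apply/h4; by exists x. Qed.

Lemma iso x y : M x -> M y -> dG' (V x) (V y) = dG x y.
Proof.
case: hV => h1 h2 _ _ Mx My; case: MS => _ Ms.
have Mxy a : M (x + a *: y) by rewrite addrC; apply: Ms.
by apply: (polar iG iG' h1); apply: h2.
Qed.

Lemma L4h : rcomp (adj dH dG (adj dG dH J)) (adj dG dH J) `<=`
            rcomp (adj dH dG' (adj dG' dH J')) (adj dG' dH J').
Proof.
move=> [f h] /= [g [h1 h2]].
have Mg : M g := in_cl hH linS hG hQ h2.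
exists (V g); split.
  move=> a b [psi [psi' [Sq /= -> ->]]].
  rewrite (iso Mg (MQ Sq)); apply: h1; by exists psi, psi'.
move=> a b' hab /=.
have [q [Nq ho]] := proj iG' cG' NS NC b'.
case: hV => _ _ _ h4; have [m Mm Vm] := (h4 q).1 Nq.
have Jam : adj dG dH J (a, m).
  move=> a0 b0 [psi [psi' [Sq /= -> ->]]].
  rewrite -(iso Mm (MQ Sq)) Vm (dBl0 iG' (ho _ (NQ Sq))).
  apply: hab; by exists psi, psi'.
rewrite (h2 _ _ Jam) -(iso Mg Mm) Vm.
apply: (dBr0 iG'); exact: ho _ (VN Mg).
Qed.

Lemma L4h' : rcomp (adj dH dG' (adj dG' dH J')) (adj dG' dH J') `<=`
             rcomp (adj dH dG (adj dG dH J)) (adj dG dH J).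
Proof.
move=> [f h] /= [g' [h1 h2]].
have Ng : N g' := in_cl hH linS hG' hQ' h2.
case: hV => _ _ _ h4; have [g Mg Vg] := (h4 g').1 Ng; subst g'.
exists g; split.
  move=> a b [psi [psi' [Sq /= -> ->]]].
  rewrite -(iso Mg (MQ Sq)); apply: h1; by exists psi, psi'.
move=> a b hab /=.
have [m [Mm ho]] := proj iG cG MS MC b.
have Jam : adj dG' dH J' (a, V m).
  move=> a0 b0 [psi [psi' [Sq /= -> ->]]].
  rewrite (iso Mm (MQ Sq)) (dBl0 iG (ho _ (MQ Sq))).
  apply: hab; by exists psi, psi'.
rewrite (h2 _ _ Jam) /= (iso Mg Mm).
apply: (dBr0 iG); exact: ho _ Mg.
Qed.

Lemma L4 : rcomp (adj dH dG (adj dG dH J)) (adj dG dH J) =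
           rcomp (adj dH dG' (adj dG' dH J')) (adj dG' dH J').
Proof. by apply/seteqP; split; [exact: L4h | exact: L4h']. Qed.
End Five.
Unset Implicit Arguments.
Theorem corollary3p3 (R : realType)
  (H : lmodType R[i]) (dH : H -> H -> R[i])
  (G : lmodType R[i]) (dG : G -> G -> R[i])
  (G' : lmodType R[i]) (dG' : G' -> G' -> R[i])
  (hH : hilbert dH) (hG : hilbert dG) (hG' : hilbert dG')
  (S : set (H * H)) (gamma c : R) (Q : H -> G) (V : G -> G')
  (linS : linrel S) (semiS : semibounded_lb dH S gamma) (hc : c <= gamma)
  (hQ : representing_map dH dG S c Q)
  (hV : partial_isometry dG dG' (nclosure dG (qran S Q))
          (nclosure dG' (qran S (V \o Q))) V)
  (hQ' : representing_map dH dG' S c (V \o Q)) :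
  let J : set (G * H) := companion S c Q in
  let J' : set (G' * H) := companion S c (V \o Q) in
  let Js : set (H * G) := adj dG dH J in
  let Js' : set (H * G') := adj dG' dH J' in
  let Jss : set (G * H) := adj dH dG Js in
  let Jss' : set (G' * H) := adj dH dG' Js' in
  let Jsr : set (H * G) := rreg dG Js in
  let Jsr' : set (H * G') := rreg dG' Js' in
  [/\ rcomp J' Js' = rcomp J' Jsr',
      rcomp J' Jsr' = rcomp J Jsr &
      rcomp J Jsr = rcomp J Js] /\
  [/\ rcomp Jss' Js' = rcomp (adj dH dG' Jsr') Jsr',
      rcomp (adj dH dG' Jsr') Jsr' = rcomp (adj dH dG Jsr) Jsr &
      rcomp (adj dH dG Jsr) Jsr = rcomp Jss Js].
Proof.
cbv zeta.
case: (hG) => iG cG; case: (hG') => iG' cG'; case: (hH) => iH _.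
have l1 := L1 iH iG (companion S c Q).
have l1' := L1 iH iG' (companion S c (V \o Q)).
have l2 := L2 iH iG (companion S c Q) cG.
have l2' := L2 iH iG' (companion S c (V \o Q)) cG'.
have l3 := L3 hQ hQ'.
have l4 := L4 iH linS hG hG' hQ hV hQ'.
split; split.
- exact: l1'.
- by rewrite -l1' -l3 l1.
- by rewrite l1.
- exact: l2'.
- by rewrite -l2' -l4 l2.
- by rewrite l2.
Qed.
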